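(* For each $p\ge2$ let $y=(y_1,\dots,y_p)$ with $y_i=\mu_i+\epsilon_i$, $\epsilon_i$ i.i.d. $N(0,1)$, where $\mu_1=r\sqrt{2\log p}$ for a fixed constant $r>1$ and $\mu_i=0$ for $i\ge2$. Let $\lambda_1\ge\lambda_2$ be the two largest values among $|y_1|,\dots,|y_p|$, and let $\tilde\Phi=1-\Phi$ be the standard Gaussian survival function. Then the $p$-value $\tilde\Phi(\lambda_1)/\tilde\Phi(\lambda_2)$ converges to $0$ in probability as $p\to\infty$; in particular, for every fixed $\alpha\in(0,1)$, $\Pr\big(\tilde\Phi(\lambda_1)/\tilde\Phi(\lambda_2)\le\alpha\big)\to1$.
   Context: This is the setting of groups of size one with an orthonormal design reduced to the identity design $X=I_p$, $n=p$; here $\lambda_1,\lambda_2$ are the first two knots of the LASSO solution path and $\tilde\Phi(\lambda_1)/\tilde\Phi(\lambda_2)$ is the first-step truncated-$\chi$ $p$-value. *)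

(* Defs.v *)
From HB Require Import structures.
From mathcomp Require Import all_boot all_order all_algebra.
From mathcomp Require Import all_classical all_reals all_analysis.
Set Implicit Arguments. Unset Strict Implicit. Unset Printing Implicit Defensive.
Import Order.TTheory GRing.Theory Num.Theory.
Import numFieldNormedType.Exports.
Local Open Scope classical_set_scope.
Local Open Scope ring_scope.

Definition std_Phi {R : realType} (x : R) : R :=
  fine (normal_prob (0:R) 1 `]-oo, x]).
Definition std_surv {R : realType} (x : R) : R := 1 - std_Phi x.

Definition mutually_independent {R : realType} {d} {T : measurableType d}
  (P : probability T R) (I : finType) (X : I -> T -> R) : Prop :=
  forall A : I -> set R, (forall i, measurable (A i)) ->
    fine (P (\bigcap_(i in [set: I]) (X i @^-1` A i))) =
    \prod_(i : I) fine (P (X i @^-1` A i)).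

(* Mean vector: mu_1 = r sqrt(2 log p) (index 0 here), mu_i = 0 otherwise. *)
Definition mean_vec {R : realType} (r : R) (p : nat) (i : 'I_p) : R :=
  if nat_of_ord i == 0%N then r * Num.sqrt (2 * ln (p%:R)) else 0.

Definition sorted_abs {R : realType} (p : nat) (y : 'I_p -> R) : seq R :=
  sort (fun a b : R => b <= a) [seq `|y i| | i <- enum 'I_p].

Definition lambda1 {R : realType} (p : nat) (y : 'I_p -> R) : R :=
  nth 0 (sorted_abs y) 0.
Definition lambda2 {R : realType} (p : nat) (y : 'I_p -> R) : R :=
  nth 0 (sorted_abs y) 1.

Definition pvalue {R : realType} (p : nat) (y : 'I_p -> R) : R :=
  std_surv (lambda1 y) / std_surv (lambda2 y).

(* Main.v *)
Require Import Defs.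
From HB Require Import structures.
From mathcomp Require Import all_boot all_order all_algebra.
From mathcomp Require Import all_classical all_reals all_analysis.
From mathcomp Require Import ring lra measurable_realfun.
Import Order.TTheory GRing.Theory Num.Theory.
Import numFieldNormedType.Exports.
Local Open Scope classical_set_scope.
Local Open Scope ring_scope.
Section gauss.
Context {R : realType}.
Implicit Types x y t D : R.
Notation mu := (@lebesgue_measure R).
Notation phi := (normal_pdf (0:R) 1).
Notation NP := (normal_prob (0:R) 1).

Lemma phiE x : phi x = normal_peak (1:R) * expR (- x ^+ 2 / 2).
Proof.
rewrite normal_pdfE ?oner_neq0 //= /normal_fun subr0 expr1n.
done.
Qed.

Lemma phi_shift x D : phi (x + D) = phi x * expR (- (x * D) - D ^+ 2 / 2).
Proof.
rewrite !phiE -mulrA -expRD; congr (_ * expR _).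
by rewrite sqrrD; field.
Qed.

Lemma phiN x : phi (- x) = phi x.
Proof. by rewrite !phiE sqrrN. Qed.

Lemma cont_phi : continuous phi.
Proof. exact: continuous_normal_pdf (oner_neq0 R). Qed.

Lemma mphi : measurable_fun setT phi.
Proof. exact: measurable_normal_pdf. Qed.


Lemma NP_shift x D :
  NP `[x + D, +oo[ = (\int[mu]_(t in `[x, +oo[) (phi (t + D))%:E)%E.
Proof.
have F'E : ((fun t : R => t + D)^`())%classic = cst 1.
  by apply/funext => t; rewrite derive1E deriveD// derive_id derive_cst addr0.
rewrite /normal_prob (@increasing_ge0_integration_by_substitutiony _ (fun t => t + D) phi x).
- by apply: eq_integral => t _; rewrite F'E /= mulr1.
- by move=> a b _ _; rewrite ltrD2r.
- by rewrite F'E => ? _; exact: cst_continuous.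
- by rewrite F'E; exact: is_cvg_cst.
- by rewrite F'E; exact: is_cvg_cst.
- split; first by move=> t _; exact: derivableD.
  apply: cvg_at_right_filter; apply: cvgD; [exact: cvg_id|exact: cvg_cst].
- exact: cvg_addrr.
- by apply: continuous_subspaceT; exact: cont_phi.
- by move=> t _; exact: normal_pdf_ge0.
Qed.


Lemma mphiE (A : set R) : measurable_fun A (EFin \o phi).
Proof. by apply/measurable_EFinP; apply: measurable_funTS; exact: mphi. Qed.

Lemma NP_shift_le x D : 0 <= D ->
  (NP `[(x + D)%R, +oo[ <= (expR (- (x * D) - D ^+ 2 / 2)%R)%:E * NP `[x, +oo[)%E.
Proof.
move=> D0; rewrite NP_shift /normal_prob.
rewrite -ge0_integralZl//; last 2 first.
- exact: mphiE.
- by move=> t _; rewrite lee_fin normal_pdf_ge0.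
apply: ge0_le_integral => //.
- by move=> t _; rewrite lee_fin normal_pdf_ge0.
- apply/measurable_EFinP; apply: measurable_funTS.
  by apply: measurableT_comp; [exact: mphi|exact: measurable_funD].
- by apply: measurable_funeM; exact: mphiE.
move=> t; rewrite /= in_itv /= andbT => xt.
rewrite phi_shift -EFinM lee_fin mulrC ler_wpM2r ?normal_pdf_ge0// ler_expR.
by rewrite lerD2r lerN2 ler_wpM2r.
Qed.

Lemma NP_refl t : NP `]-oo, - t] = NP `[t, +oo[.
Proof.
rewrite /normal_prob ge0_integration_by_substitutionNy.
- by apply: eq_integral => u _; rewrite /= phiN.
- by apply: continuous_subspaceT; exact: cont_phi.
- by move=> u _; exact: normal_pdf_ge0.
Qed.

Lemma NP_oc a : NP `]a, +oo[ = NP `[a, +oo[.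
Proof. by rewrite /normal_prob integral_itv_obnd_cbnd //; exact: mphiE. Qed.

Lemma NP_le1 A : measurable A -> (NP A <= 1)%E.
Proof. by move=> mA; apply: probability_le1. Qed.


Lemma NP_fin A : measurable A -> NP A \is a fin_num.
Proof.
move=> mA; rewrite ge0_fin_numE ?measure_ge0//.
by rewrite (le_lt_trans (NP_le1 _ mA))// ltry.
Qed.

Lemma NP_fineK A : measurable A -> NP A = (fine (NP A))%:E.
Proof. by move=> mA; rewrite fineK// NP_fin. Qed.

Lemma survE x : std_surv x = fine (NP `]x, +oo[).
Proof.
rewrite /std_surv /std_Phi -setCitvr probability_setC//.
rewrite fineB// ?NP_fin//= opprB addrC subrK.
done.
Qed.

Lemma surv_ge0 x : 0 <= std_surv x.
Proof. by rewrite survE fine_ge0// measure_ge0. Qed.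

Lemma surv_le x y : x <= y -> std_surv y <= std_surv x.
Proof.
move=> xy; rewrite !survE fine_le ?NP_fin//; apply: le_measure; rewrite ?inE//.
by move=> t; rewrite /= !in_itv /= !andbT; exact: le_lt_trans.
Qed.

Lemma surv_shift x D : 0 <= x -> 0 <= D ->
  std_surv (x + D) <= expR (- (D ^+ 2 / 2)) * std_surv x.
Proof.
move=> x0 D0; rewrite !survE !NP_oc.
rewrite -lee_fin EFinM -!NP_fineK//.

apply: le_trans (NP_shift_le x D D0) _.
apply: lee_wpmul2r; first exact: measure_ge0.
by rewrite lee_fin ler_expR; have := mulr_ge0 x0 D0; lra.
Qed.

Lemma surv_tail t : 0 <= t -> std_surv t <= expR (- (t ^+ 2 / 2)).
Proof.
move=> t0; have := @surv_shift 0 t (lexx 0) t0; rewrite add0r => /le_trans; apply.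
by rewrite ler_piMr ?expR_ge0// survE -lee_fin -NP_fineK// NP_le1.
Qed.


Lemma abs_set_eq t : [set u : R | t < `|u|] = `]t, +oo[ `|` `]-oo, (- t)%R[.
Proof.
apply/seteqP; split => u /=; rewrite !in_itv /= ?andbT.
  by rewrite ltr_normr => /orP[H|H]; [left|right]; rewrite // ltrNr.
by case => H; rewrite ltr_normr ?H // ltrNr H orbT.
Qed.

Lemma NP_abs_tail t : 0 <= t ->
  (NP [set u : R | (t < `|u|)%R] <= (2 * expR (- (t ^+ 2 / 2)))%:E)%E.
Proof.
move=> t0; rewrite abs_set_eq.
apply: le_trans (measureU2 _ _ _) _ => //.
have H1 : (NP `]-oo, (- t)%R[ <= NP `]t, +oo[)%E.
  rewrite NP_oc -NP_refl; apply: le_measure; rewrite ?inE//.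
  by move=> u; rewrite /= !in_itv /= => /ltW.
apply: le_trans (leeD2l _ H1) _.
have H2 : (NP `]t,+oo[ <= (expR (- (t ^+ 2 / 2)))%:E)%E.
  by rewrite NP_fineK// -survE lee_fin surv_tail.
apply: le_trans (leeD H2 H2) _.
by rewrite -EFinD lee_fin mulr2n mulrDl mul1r.
Qed.

End gauss.
Section comb.
Context {R : realType}.
Notation ge := (fun a b : R => b <= a).

Lemma ge_trans : transitive ge.
Proof. by move=> a b c ba cb; exact: le_trans cb ba. Qed.

Lemma ge_total : total ge.
Proof. by move=> a b; rewrite orbC; exact: le_total. Qed.

Lemma nth_ge0 (t : seq R) k : all (fun x => 0 <= x) t -> 0 <= nth 0 t k.
Proof.
move=> /allP H; have [kt|kt] := ltnP k (size t).
  by apply: H; exact: mem_nth.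
by rewrite nth_default.
Qed.

Lemma sorted_count (t : seq R) (c : R) k : sorted ge t ->
  all (fun x => 0 <= x) t -> 0 <= c ->
  (c < nth 0 t k) = (k < count (fun x => (c < x)%R) t)%N.
Proof.
move=> + + c0; elim: t k => [|x t IH] k /=.
  by move=> _ _; rewrite nth_nil ltNge c0.
move=> pth /andP[x0 t0].
have st := path_sorted pth.
have /allP xge := order_path_min ge_trans pth.
have [cx|cx] := ltP c x.
  case: k => [|k] /=; first by rewrite cx.
  by rewrite IH // add1n ltnS.
have cnt0 : count (fun x0 => c < x0) t = 0%N.
  apply/eqP; rewrite -leqn0 leqNgt -has_count; apply/hasPn => y yt.
  by rewrite -leNgt (le_trans _ cx) // xge.
rewrite cnt0 /=; case: k => [|k] /=; first by rewrite ltNge cx.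
apply/negbTE; rewrite -leNgt; have [kt|kt] := ltnP k (size t).
  by rewrite (le_trans _ cx) // xge // mem_nth.
by rewrite nth_default.
Qed.

Lemma count_natr (T : Type) (a : pred T) (s : seq T) :
  (count a s)%:R = \sum_(x <- s) ((a x)%:R : R).
Proof.
elim: s => [|x s IH] /=; first by rewrite big_nil.
by rewrite big_cons natrD IH.
Qed.

Variable p : nat.
Implicit Type y : 'I_p -> R.

Lemma sorted_abs_sorted y : sorted ge (sorted_abs y).
Proof. exact: (sort_sorted ge_total). Qed.

Lemma sorted_abs_ge0 y : all (fun x => 0 <= x) (sorted_abs y).
Proof.
rewrite /sorted_abs (perm_all _ (permEl (perm_sort _ _))).
by apply/allP => x /mapP [i _ ->].
Qed.

Lemma sorted_abs_count y (c : R) k : 0 <= c ->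
  (c < nth 0 (sorted_abs y) k) =
  (k < count (fun i => (c < `|y i|)%R) (enum 'I_p))%N.
Proof.
move=> c0; rewrite sorted_count ?sorted_abs_sorted ?sorted_abs_ge0 //.
by rewrite /sorted_abs ((permP (permEl (perm_sort _ _))) _) count_map.
Qed.

Lemma lambda1_ge0 y : 0 <= lambda1 y.
Proof. exact/nth_ge0/sorted_abs_ge0. Qed.

Lemma lambda2_ge0 y : 0 <= lambda2 y.
Proof. exact/nth_ge0/sorted_abs_ge0. Qed.

Lemma lambda1_ub y i : `|y i| <= lambda1 y.
Proof.
rewrite leNgt; apply/negP => H.
have := @sorted_abs_count y (lambda1 y) 0 (lambda1_ge0 y).
rewrite -/(lambda1 y) ltxx => /esym; rewrite -has_count => /negP; apply.
by apply/hasP; exists i => //; rewrite mem_enum.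
Qed.

Lemma lambda2_le y (M : R) (i0 : 'I_p) : 0 <= M ->
  (forall i, i != i0 -> `|y i| <= M) -> lambda2 y <= M.
Proof.
move=> M0 H; rewrite leNgt; apply/negP.
rewrite /lambda2 sorted_abs_count //; apply/negP; rewrite -leqNgt.
apply: leq_trans (sub_count (a2 := pred1 i0) _ _) _.
  move=> i /= Hi; apply/negPn/negP => /H; by rewrite leNgt Hi.
by rewrite count_uniq_mem ?enum_uniq // leq_b1.
Qed.

End comb.
Section meas.
Context {R : realType}.

Lemma measurable_inv : measurable_fun setT (fun x : R => x^-1).
Proof.
have E : [set: R] = `]-oo, 0[ `|` ([set 0] `|` `]0, +oo[).
  apply/seteqP; split => x // _ /=; rewrite !in_itv /= andbT.
  by case: ltgtP => H; [left|right; right|right; left].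
rewrite E; apply/measurable_funU => //; first exact: measurableU.
split.
  apply: open_continuous_measurable_fun; first exact: interval_open.
  move=> x; rewrite inE /= in_itv /= => H; apply: inv_continuous.
  by rewrite lt_eqF.
apply/measurable_funU => //; split; first exact: measurable_fun_set1.
apply: open_continuous_measurable_fun; first exact: interval_open.
move=> x; rewrite inE /= in_itv /= andbT => H; apply: inv_continuous.
by rewrite gt_eqF.
Qed.

End meas.
Lemma surv_measurable {R : realType} : measurable_fun setT (@std_surv R).
Proof. by apply: nonincreasing_measurable => // x y; exact: surv_le. Qed.

Section lam.
Context d (T : measurableType d) (R : realType) (p : nat).
Variable Y : 'I_p -> T -> R.
Hypothesis mY : forall i, measurable_fun setT (Y i).

Lemma meas_lt (g : T -> R) a : measurable_fun setT g -> measurable [set w | a < g w].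
Proof.
by move=> mg; have := mg measurableT _ (measurable_itv `]a, +oo[); rewrite setTI preimage_itvoy.
Qed.

Lemma meas_nth k :
  measurable_fun setT (fun w => nth 0 (sorted_abs (fun i => Y i w)) k).
Proof.
apply: (measurability _ (RGenOInfty.measurableE R)) => //.
move=> /= _ [_ [a ->] <-]; rewrite preimage_itvoy setTI.
have [a0|a0] := ltP a 0.
  rewrite (_ : [set _ | _] = setT) //; apply/seteqP; split => // w _ /=.
  exact: lt_le_trans a0 (nth_ge0 _ _ (sorted_abs_ge0 _ _)).
pose f w := \sum_(i <- enum 'I_p) (\1_[set w | a < `|Y i w|] w : R).
have mf : measurable_fun setT f.
  apply: measurable_sum => i; apply: measurable_indic; apply: meas_lt.
  exact: measurableT_comp.
have fE w : f w = (count (fun i => (a < `|Y i w|)%R) (enum 'I_p))%:R.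
  rewrite count_natr /f; apply: eq_bigr => i _; rewrite indicE.
  case: (boolP (a < `|Y i w|)) => H; first by rewrite mem_set.
  by rewrite memNset //=; apply/negP.
rewrite (_ : [set _ | _] = [set w | k%:R < f w]); first exact: meas_lt.
by apply/seteqP; split => w /=; rewrite fE ltr_nat sorted_abs_count.
Qed.

Lemma meas_pvalue : measurable_fun setT (fun w => pvalue (fun i => Y i w)).
Proof.
apply: measurable_funM.
  exact: measurableT_comp surv_measurable (meas_nth 0).
apply: measurableT_comp measurable_inv _.
exact: measurableT_comp surv_measurable (meas_nth 1).
Qed.

End lam.
Lemma det_bound {R : realType} (p : nat) (i0 : 'I_p) (r c s D : R)
    (e : 'I_p -> R) :
  nat_of_ord i0 = 0%N -> 0 <= r -> 0 <= c -> 0 <= s -> 0 <= D ->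
  let S := Num.sqrt (2 * ln (p%:R : R)) in
  s * S + D <= r * S - c * S ->
  `|e i0| <= c * S -> (forall i, `|e i| <= s * S) ->
  pvalue (fun i => mean_vec r i + e i) <= expR (- (D ^+ 2 / 2)).
Proof.
move=> i00 r0 c0 s0 D0 S gap e0 es.
set y := fun i => mean_vec r i + e i.
have S0 : 0 <= S by exact: sqrtr_ge0.
have l2 : lambda2 y <= s * S.
  apply: (@lambda2_le R p y (s * S) i0); first exact: mulr_ge0.
  move=> i ni; rewrite /y /mean_vec.
  have -> : (nat_of_ord i == 0%N) = false.
    apply/negP => /eqP H; move/negP: ni; apply; apply/eqP/val_inj.
    by rewrite /= H i00.
  by rewrite add0r es.
have l1 : r * S - c * S <= lambda1 y.
  apply: le_trans (lambda1_ub _ y i0); rewrite /y /mean_vec i00 eqxx -/S.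
  apply: le_trans (lerB_normD _ _); apply: lerB => //.
  by rewrite ger0_norm // mulr_ge0.
have gap2 : lambda2 y + D <= lambda1 y.
  lra.
have l20 := lambda2_ge0 _ y.
have H1 : std_surv (lambda1 y) <= expR (- (D ^+ 2 / 2)) * std_surv (lambda2 y).
  exact: le_trans (surv_le _ _ gap2) (surv_shift _ _ l20 D0).
rewrite /pvalue; have [z|nz] := eqVneq (std_surv (lambda2 y)) 0.
  by rewrite z invr0 mulr0 expR_ge0.
have pz : 0 < std_surv (lambda2 y) by rewrite lt_def nz surv_ge0.
by rewrite ler_pdivrMr.
Qed.
Section asym.
Context {R : realType}.

Lemma ev_ge (N : nat) : \forall p \near \oo, (N <= p)%N.
Proof. by exists N. Qed.

Lemma ev_ln (M : R) : \forall p \near \oo, M <= ln (p%:R : R).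
Proof.
exists (Num.truncn (expR M)).+1 => // p /= Hp.
have H : expR M < p%:R.
  by apply: lt_le_trans (truncnS_gt _) _; rewrite ler_nat.
rewrite -{1}(expRK M) ler_ln ?posrE ?expR_gt0 ?(lt_trans (expR_gt0 M)) //.
exact: ltW.
Qed.

Lemma ev_exp (k b : R) : 0 < k -> 0 < b ->
  \forall p \near \oo, expR (- (k * ln (p%:R : R))) <= b.
Proof.
move=> k0 b0; near=> p.
have : - ln b / k <= ln (p%:R : R) by near: p; exact: ev_ln.
rewrite ler_pdivrMr // => H.
rewrite -[leRHS](lnK (x := b)) ?posrE // ler_expR; lra.
Unshelve. all: by end_near. Qed.

End asym.
Lemma key d (T : measurableType d) (R : realType) (P : probability T R)
  (eps : forall p : nat, 'I_p -> {RV P >-> R}) (r : R) :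
  1 < r ->
  (forall p : nat, (2 <= p)%N -> forall (i : 'I_p) (A : set R), measurable A ->
        distribution P (eps p i) A = normal_prob 0 1 A) ->
  forall D : R, 0 <= D -> forall e : R, 0 < e -> \forall p \near \oo,
   exists2 B : set T, measurable B /\ (P B <= e%:E)%E &
     forall w, ~ B w ->
       pvalue (fun i : 'I_p => mean_vec r i + eps p i w) <= expR (- (D ^+ 2 / 2)).
Proof.
move=> r1 H D D0 e e0.
pose c := (r - 1) / 4; pose s := 1 + (r - 1) / 4.
have c0 : 0 < c by rewrite /c; lra.
have s1 : 1 < s by rewrite /s; lra.
near=> p.
have p2 : (2 <= p)%N by near: p; exact: ev_ge.
have nA : expR (- (c ^+ 2 * ln (p%:R : R))) <= e / 4.
  by near: p; apply: ev_exp; [exact: exprn_gt0|lra].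
have nB : expR (- ((s ^+ 2 - 1) * ln (p%:R : R))) <= e / 4.
  near: p; apply: ev_exp; last lra.
  by rewrite subr_gt0 expr_gt1 //; lra.
have nG : (2 * D / (r - 1)) ^+ 2 / 2 <= ln (p%:R : R) by near: p; exact: ev_ln.
have p0 : (0 < p)%N by apply: leq_trans p2.
pose i0 := Ordinal p0.
set L := ln (p%:R : R) in nA nB nG *; set S := Num.sqrt (2 * L).
have L0 : 0 <= L by apply: ln_ge0; rewrite ler1n; apply: leq_trans p2.
have S0 : 0 <= S by exact: sqrtr_ge0.
have tailP (i : 'I_p) (t : R) : 0 <= t ->
    (P [set w | (t < `|eps p i w|)%R] <= (2 * expR (- (t ^+ 2 / 2)))%:E)%E.
  move=> t0; have mt : measurable [set u : R | (t < `|u|)%R].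
    by rewrite abs_set_eq; exact: measurableU.
  have := H p p2 i _ mt; rewrite /distribution /pushforward => ->.
  exact: NP_abs_tail.
have gap : s * S + D <= r * S - c * S.
  have q0 : 0 <= 2 * D / (r - 1) by apply: divr_ge0; lra.
  have qS : 2 * D / (r - 1) <= S.
    rewrite -(ger0_norm q0) -sqrtr_sqr ler_sqrt; last lra.

    lra.
  have : D <= (r - 1) / 2 * S.
    by move: qS; rewrite ler_pdivrMr ?subr_gt0 //; lra.
  rewrite /s /c; lra.
pose A (k : nat) : set T :=
  if insub k is Some i then [set w | (s * S < `|eps p i w|)%R] else set0.
have AE (i : 'I_p) : A i = [set w | (s * S < `|eps p i w|)%R].
  by rewrite /A valK.
have mA (k : nat) : measurable (A k).
  rewrite /A; case: insub => // i; apply: meas_lt.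
  by apply: measurableT_comp => //; exact: measurable_funPT.
pose B := [set w | (c * S < `|eps p i0 w|)%R] `|` \big[setU/set0]_(i < p) A i.
exists B.
  split.
    apply: measurableU; last exact: bigsetU_measurable.
    apply: meas_lt; apply: measurableT_comp => //; exact: measurable_funPT.
  have mA0 : measurable [set w | (c * S < `|eps p i0 w|)%R].
    apply: meas_lt; apply: measurableT_comp => //; exact: measurable_funPT.
  have mbig : measurable (\big[setU/set0]_(i < p) A i).
    exact: bigsetU_measurable.
  apply: le_trans (measureU2 _ mA0 mbig) _.
  have h1 := tailP i0 (c * S) (mulr_ge0 (ltW c0) S0).
  have h2 : (P (\big[setU/set0]_(i < p) A i) <=
             (p%:R * (2 * expR (- ((s * S) ^+ 2 / 2))))%:E)%E.
    apply: le_trans (Boole_inequality P (fun i _ => mA i)) _.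
    have sS0 : 0 <= s * S by apply: mulr_ge0 => //; lra.
    have hi (i : 'I_p) : (P (A i) <= (2 * expR (- ((s * S) ^+ 2 / 2)))%:E)%E.
      by rewrite AE; exact: tailP.
    apply: le_trans (lee_sum _ (fun i _ => hi i)) _.
    by rewrite sumEFin big_const_ord iter_addr_0 lee_fin [leRHS]mulr_natl.
  apply: le_trans (leeD h1 h2) _.
  rewrite -EFinD lee_fin.
  have E1 : (c * S) ^+ 2 / 2 = c ^+ 2 * L.
    by rewrite exprMn sqr_sqrtr; [by field | lra].
  have E2 : p%:R * (2 * expR (- ((s * S) ^+ 2 / 2))) =
            2 * expR (- ((s ^+ 2 - 1) * L)).
    have pp : (0 : R) < p%:R by rewrite ltr0n.
    rewrite -[X in X * _](lnK (x := p%:R)) ?posrE // -/L mulrCA -expRD.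
    congr (_ * expR _); rewrite exprMn sqr_sqrtr; [by field | lra].
  rewrite E1 E2; lra.
move=> w notB; apply: (@det_bound R p i0 r c s D (fun i => eps p i w)) => //; first lra; first exact: ltW; first lra.
  rewrite leNgt; apply/negP => h; apply: notB; by left.
move=> i; rewrite leNgt; apply/negP => h; apply: notB; right.
rewrite -bigcup_mkord; exists (nat_of_ord i) => //=; rewrite AE.
exact: h.
Unshelve. all: by end_near. Qed.
Lemma Dex {R : realType} (b : R) : 0 < b ->
  exists2 D : R, 0 <= D & expR (- (D ^+ 2 / 2)) < b.
Proof.
move=> b0; exists (Num.sqrt (2 / b)); first exact: sqrtr_ge0.
rewrite sqr_sqrtr ?divr_ge0 //; last lra.
rewrite (_ : 2 / b / 2 = b^-1); last by field; lra.
rewrite expRN -[ltRHS]invrK ltf_pV2 ?posrE ?expR_gt0 ?invr_gt0 //.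
have := expR_ge1Dx b^-1; lra.
Qed.

Theorem mainTheorem3 (R : realType) (d : measure_display) (T : measurableType d)
  (P : probability T R) (eps : forall p : nat, 'I_p -> {RV P >-> R}) (r : R) :
  1 < r ->
  (forall p : nat, (2 <= p)%N ->
     mutually_independent P (fun i : 'I_p => (eps p i : T -> R)) /\
     (forall (i : 'I_p) (A : set R), measurable A ->
        distribution P (eps p i) A = normal_prob 0 1 A)) ->
  let pv := fun (p : nat) (w : T) =>
    pvalue (fun i : 'I_p => mean_vec r i + eps p i w) in
  (forall e : R, 0 < e ->
     (fun p : nat => fine (P [set w | e < `|pv p w|])) @ \oo --> (0 : R)) /\
  (forall alpha : R, 0 < alpha < 1 ->
     (fun p : nat => fine (P [set w | pv p w <= alpha])) @ \oo --> (1 : R)).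
Proof.
move=> r1 H pv.
have Hd : forall p : nat, (2 <= p)%N -> forall (i : 'I_p) (A : set R),
    measurable A -> distribution P (eps p i) A = normal_prob 0 1 A.
  by move=> p p2 i A mA; exact: ((H p p2).2 i A mA).
have mpv p : measurable_fun setT (pv p).
  apply: (@meas_pvalue _ T R p (fun i w => mean_vec r i + eps p i w)) => i.
  by apply: measurable_funD => //; exact: measurable_funPT.
have pv0 p w : 0 <= pv p w.
  by rewrite /pv /pvalue; apply: divr_ge0; exact: surv_ge0.
have fP (A : set T) : measurable A -> P A = (fine (P A))%:E.
  by move=> mA; rewrite fineK // fin_num_measure.
split.
- move=> e e0; have [D D0 De] := Dex _ e0.
  apply/cvgrPdist_lt => x x0.
  have x20 : 0 < x / 2 by rewrite divr_gt0.
  have := @key d T R P eps r r1 Hd D D0 (x / 2) x20.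
  apply: filterS => p [B [mB PB] HB].
  have mS : measurable [set w | e < `|pv p w|].
    by apply: meas_lt; apply: measurableT_comp => //; exact: mpv.
  have SB : [set w | e < `|pv p w|] `<=` B.
    move=> w /= Sw; have [//|nB] := pselect (B w); exfalso.
    have := HB w nB; rewrite -/(pv p w) => h.
    move: Sw; rewrite ger0_norm // => Sw; lra.
  have := le_measure P (mem_set mS) (mem_set mB) SB.
  move=> /le_trans /(_ PB); rewrite [X in (X <= _)%E](fP _ mS) lee_fin => h.
  rewrite sub0r normrN ger0_norm; last by rewrite fine_ge0 // measure_ge0.
  lra.
- move=> a /andP[a0 a1]; have [D D0 Da] := Dex _ a0.
  apply/cvgrPdist_lt => x x0.
  have x20 : 0 < x / 2 by rewrite divr_gt0.
  have := @key d T R P eps r r1 Hd D D0 (x / 2) x20.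
  apply: filterS => p [B [mB PB] HB].
  have mS : measurable [set w | pv p w <= a].
    rewrite (_ : [set w | pv p w <= a] = ~` [set w | a < pv p w]).
      by apply: measurableC; apply: meas_lt; exact: mpv.
    by apply/seteqP; split => w /=; rewrite leNgt => /negP.
  have SB : ~` B `<=` [set w | pv p w <= a].
    move=> w /= nB; have := HB w nB; rewrite -/(pv p w) => h; lra.
  have h0 := le_measure P (mem_set (measurableC mB)) (mem_set mS) SB.
  have h0' : (1 - P B <= P [set w | (pv p w <= a)%R])%E.
    by rewrite -(probability_setC P mB); exact: h0.
  move: h0'; rewrite [X in (_ <= X)%E](fP _ mS) (fP B) //.
  rewrite -EFinB lee_fin => h1.
  have h2 : fine (P [set w | pv p w <= a]) <= 1.
    by rewrite -lee_fin -fP // probability_le1.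
  move: PB; rewrite (fP B) // lee_fin => h3.
  rewrite ger0_norm; lra.
Qed.
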